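(* Let $f_1=f_1(x^1)$ be a smooth nowhere-vanishing function depending only on $x^1$, let $f_2=k_2$, $f_3=k_3$ with $k_2,k_3\in\mathbb R\setminus\{0\}$, and $g=\frac{1}{f_1^2}dx^1\otimes dx^1+\frac{1}{k_2^2}dx^2\otimes dx^2+\frac{1}{k_3^2}dx^3\otimes dx^3$. Let $F$ satisfy $F'=\frac{1}{f_1}$. Then $V=\sum_{k=1}^3V^kE_k$, with $E_i=f_i\frac{\partial}{\partial x^i}$, is a Killing vector field of $(\mathbb R^3,g)$ if and only if $V^1(x^2,x^3)=c_1x^2+c_2x^3+c_3$, $V^2(x^1,x^3)=-c_1k_2F(x^1)-\frac{c_4}{k_3}x^3+c_5$, $V^3(x^1,x^2)=-c_2k_3F(x^1)+\frac{c_4}{k_2}x^2+c_6$ for some $c_1,\dots,c_6\in\mathbb R$.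
   Context: $x^1,x^2,x^3$ are the standard coordinates on $\mathbb R^3$; $V^k$ are smooth functions and writing $h(x^i,x^j)$ means $h$ depends only on those variables. A vector field $V$ is Killing if $\mathcal L_Vg=0$. *)

(* Defs.v *)
From Stdlib Require Import Reals.
From Coquelicot Require Import Coquelicot.
Open Scope R_scope.

(* Points of R^3, written (x1, x2, x3); coordinate indices 0,1,2 stand for x^1,x^2,x^3. *)
Definition pt : Type := (R * R * R)%type.

Definition coord (i : nat) (p : pt) : R :=
  match i with 0%nat => fst (fst p) | 1%nat => snd (fst p) | _ => snd p end.

Definition upd (i : nat) (p : pt) (t : R) : pt :=
  match i with
  | 0%nat => (t, snd (fst p), snd p)
  | 1%nat => (fst (fst p), t, snd p)
  | _ => (fst (fst p), snd (fst p), t)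
  end.

Definition partial (i : nat) (h : pt -> R) (p : pt) : R :=
  Derive (fun t => h (upd i p t)) (coord i p).

(* C^infinity on R^3: all partial derivatives of all orders exist and are continuous. *)
Definition smooth3 (f : pt -> R) : Prop :=
  exists S : (pt -> R) -> Prop, S f /\
    forall h, S h ->
      (forall p, continuous h p) /\
      forall i, (i < 3)%nat ->
        (forall p, ex_derive (fun t => h (upd i p t)) (coord i p)) /\ S (partial i h).

Definition smooth1 (f : R -> R) : Prop :=
  forall (n : nat) (x : R), ex_derive (Derive_n f n) x.

Definition sum3 (F : nat -> R) : R := F 0%nat + F 1%nat + F 2%nat.

(* Killing equation in coordinates: (L_W g)_{ij} = W^k d_k g_ij + g_kj d_i W^k + g_ik d_j W^k = 0,
   for a metric with components G i j and a vector field with coordinate components W k. *)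
Definition is_Killing (G : nat -> nat -> pt -> R) (W : nat -> pt -> R) : Prop :=
  forall i j : nat, (i < 3)%nat -> (j < 3)%nat -> forall p : pt,
    sum3 (fun k => W k p * partial k (G i j) p
                   + G k j p * partial i (W k) p
                   + G i k p * partial j (W k) p) = 0.

Definition frame (f1 : R -> R) (k2 k3 : R) (i : nat) (p : pt) : R :=
  match i with 0%nat => f1 (coord 0 p) | 1%nat => k2 | _ => k3 end.

Definition metric (f1 : R -> R) (k2 k3 : R) (i j : nat) (p : pt) : R :=
  if Nat.eqb i j then / (frame f1 k2 k3 i p) ^ 2 else 0.

(* coordinate components of V = sum_k V^k E_k with E_k = f_k d/dx^k *)
Definition vfield (f1 : R -> R) (k2 k3 : R) (V1 V2 V3 : pt -> R) (k : nat) (p : pt) : R :=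
  frame f1 k2 k3 k p *
  match k with 0%nat => V1 p | 1%nat => V2 p | _ => V3 p end.

(* Main.v *)
Require Import Defs.
From Stdlib Require Import Reals Lra Lia Psatz.
From Coquelicot Require Import Coquelicot.
Open Scope R_scope.
Lemma dinv2 (f1 : R -> R) x : ex_derive f1 x -> f1 x <> 0 -> Derive (fun t => / (f1 t)^2) x = -2 * Derive f1 x / (f1 x)^3.
Proof. intros. apply is_derive_unique. auto_derive. repeat split; auto.
change (fun x0 => f1 x0) with f1. field. auto. Qed.
Lemma pm (f1 : R -> R) k2 k3 i j k x1 x2 x3 : (i < 3)%nat -> (j < 3)%nat -> (k < 3)%nat ->
  partial k (metric f1 k2 k3 i j) (x1,x2,x3) =
  if (Nat.eqb i 0 && Nat.eqb j 0 && Nat.eqb k 0)%bool then Derive (fun t => / (f1 t)^2) x1 else 0.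
Proof.
intros Hi Hj Hk.
destruct i as [|[|[|i]]]; try lia; destruct j as [|[|[|j]]]; try lia;
destruct k as [|[|[|k]]]; try lia; unfold partial, metric, frame; simpl;
try reflexivity; apply Derive_const.
Qed.
Definition d0 (h : pt -> R) x1 x2 x3 := Derive (fun t => h (t,x2,x3)) x1.
Definition d1 (h : pt -> R) x1 x2 x3 := Derive (fun t => h (x1,t,x3)) x2.
Definition d2 (h : pt -> R) x1 x2 x3 := Derive (fun t => h (x1,x2,t)) x3.

Lemma sm_ex h : smooth3 h -> forall x1 x2 x3, ex_derive (fun t => h (t,x2,x3)) x1 /\
  ex_derive (fun t => h (x1,t,x3)) x2 /\ ex_derive (fun t => h (x1,x2,t)) x3.
Proof.
intros [S [HS Hcl]] x1 x2 x3. destruct (Hcl h HS) as [_ Hd].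
split; [|split].
- exact (proj1 (Hd 0%nat ltac:(lia)) (x1,x2,x3)).
- exact (proj1 (Hd 1%nat ltac:(lia)) (x1,x2,x3)).
- exact (proj1 (Hd 2%nat ltac:(lia)) (x1,x2,x3)).
Qed.

Definition Kval f1 k2 k3 V1 V2 V3 (i j : nat) x1 x2 x3 : R :=
  match i, j with
  | O, O => 2 / f1 x1 * d0 V1 x1 x2 x3
  | S O, S O => 2 / k2 * d1 V2 x1 x2 x3
  | S (S O), S (S O) => 2 / k3 * d2 V3 x1 x2 x3
  | O, S O | S O, O => d0 V2 x1 x2 x3 / k2 + d1 V1 x1 x2 x3 / f1 x1
  | O, S (S O) | S (S O), O => d0 V3 x1 x2 x3 / k3 + d2 V1 x1 x2 x3 / f1 x1
  | _, _ => d1 V3 x1 x2 x3 / k3 + d2 V2 x1 x2 x3 / k2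
  end.

Lemma Kexp f1 k2 k3 V1 V2 V3 i j x1 x2 x3 :
  (forall x, ex_derive f1 x) -> (forall x, f1 x <> 0) -> k2 <> 0 -> k3 <> 0 ->
  smooth3 V1 -> (i < 3)%nat -> (j < 3)%nat ->
  sum3 (fun k => vfield f1 k2 k3 V1 V2 V3 k (x1,x2,x3) * partial k (metric f1 k2 k3 i j) (x1,x2,x3)
                   + metric f1 k2 k3 k j (x1,x2,x3) * partial i (vfield f1 k2 k3 V1 V2 V3 k) (x1,x2,x3)
                   + metric f1 k2 k3 i k (x1,x2,x3) * partial j (vfield f1 k2 k3 V1 V2 V3 k) (x1,x2,x3))
  = Kval f1 k2 k3 V1 V2 V3 i j x1 x2 x3.
Proof.
intros Hd Hnz H2 H3 HV1 Hi Hj.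
destruct (sm_ex V1 HV1 x1 x2 x3) as [e0 [e1 e2]].
unfold sum3. rewrite !pm by lia.
destruct i as [|[|[|i]]]; try lia; destruct j as [|[|[|j]]]; try lia;
unfold partial, vfield, frame; cbn [partial vfield frame metric coord upd fst snd Nat.eqb andb Kval];
unfold d0, d1, d2;
rewrite ?Derive_scal.
all: try rewrite Derive_mult by auto.
all: try rewrite dinv2 by auto.
all: rewrite ?Derive_const.
all: change (fun t => f1 t) with f1.
all: try field; repeat split; auto.
Qed.

Lemma L_const (u : R -> R) : (forall t, is_derive u t 0) -> forall x y, u x = u y.
Proof.
intros H x y. destruct (Rtotal_order x y) as [h|[h|h]].
- apply (eq_is_derive u x y); auto.
- now subst.
- symmetry; apply (eq_is_derive u y x); auto.
Qed.

Lemma L_lin (u : R -> R) c : (forall t, is_derive u t c) -> forall x, u x = u 0 + c * x.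
Proof.
intros H x. pose proof (L_const (fun t => u t - c * t)) as L.
assert (u x - c * x = u 0 - c * 0). { apply L. intro t.
  assert (ex_derive u t) by (eexists; apply H). auto_derive; [auto|].
  change (fun x => u x) with u; try change (fun x => F x) with F; rewrite (is_derive_unique _ _ _ (H t)). ring. }
lra.
Qed.

Lemma L_F (u F f1 : R -> R) c : (forall x, is_derive F x (/ f1 x)) ->
  (forall t, is_derive u t (c * / f1 t)) -> forall x, u x = u 0 + c * (F x - F 0).
Proof.
intros HF H x. pose proof (L_const (fun t => u t - c * F t)) as L.
assert (u x - c * F x = u 0 - c * F 0). { apply L. intro t.
  assert (ex_derive u t) by (eexists; apply H). assert (ex_derive F t) by (eexists; apply HF).
  auto_derive; [auto|].
  change (fun x => u x) with u; try change (fun x => F x) with F; rewrite (is_derive_unique _ _ _ (H t)). rewrite (is_derive_unique _ _ _ (HF t)). ring. }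
lra.
Qed.

Lemma F_nonconst (F f1 : R -> R) : (forall x, is_derive F x (/ f1 x)) -> (forall x, f1 x <> 0) ->
  exists x, F x <> F 0.
Proof.
intros HF Hnz. destruct (Classical_Prop.classic (exists x, F x <> F 0)) as [h|h]; auto.
exfalso. assert (is_derive F 0 0).
{ apply (is_derive_ext (fun _ => F 0)). intro t. destruct (Req_dec (F t) (F 0)); auto.
  exfalso; apply h; eauto. apply (is_derive_const (F 0)). }
pose proof (is_derive_unique _ _ _ H) as E1. rewrite (is_derive_unique _ _ _ (HF 0)) in E1.
apply (Rinv_neq_0_compat _ (Hnz 0)). auto.
Qed.

Lemma Derive_line (u : R -> R) x l : ex_derive u x -> Derive u x = l -> is_derive u x l.
Proof. intros e h. rewrite <- h. now apply Derive_correct. Qed.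

Theorem mainTheorem10
  (f1 : R -> R) (k2 k3 : R) (F : R -> R) (V1 V2 V3 : pt -> R)
  (Hf1 : smooth1 f1) (Hf1nz : forall x, f1 x <> 0)
  (Hk2 : k2 <> 0) (Hk3 : k3 <> 0)
  (HF : forall x, is_derive F x (/ f1 x))
  (HV1 : smooth3 V1) (HV2 : smooth3 V2) (HV3 : smooth3 V3) :
  is_Killing (metric f1 k2 k3) (vfield f1 k2 k3 V1 V2 V3) <->
  exists c1 c2 c3 c4 c5 c6 : R, forall x1 x2 x3 : R,
    V1 (x1, x2, x3) = c1 * x2 + c2 * x3 + c3 /\
    V2 (x1, x2, x3) = - c1 * k2 * F x1 - c4 / k3 * x3 + c5 /\
    V3 (x1, x2, x3) = - c2 * k3 * F x1 + c4 / k2 * x2 + c6.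
Proof.
assert (Hd : forall x, ex_derive f1 x) by (intro x; exact (Hf1 0%nat x)).
pose proof (sm_ex _ HV1) as X1. pose proof (sm_ex _ HV2) as X2. pose proof (sm_ex _ HV3) as X3.
assert (KE : is_Killing (metric f1 k2 k3) (vfield f1 k2 k3 V1 V2 V3) <->
  forall i j x1 x2 x3, (i < 3)%nat -> (j < 3)%nat -> Kval f1 k2 k3 V1 V2 V3 i j x1 x2 x3 = 0).
{ split.
  - intros K i j x1 x2 x3 Hi Hj. rewrite <- (Kexp f1 k2 k3 V1 V2 V3 i j x1 x2 x3) by auto.
    apply (K i j Hi Hj (x1,x2,x3)).
  - intros K i j Hi Hj [[x1 x2] x3]. rewrite (Kexp f1 k2 k3 V1 V2 V3 i j x1 x2 x3) by auto. apply K; auto. }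
rewrite KE; clear KE. split.
- intro K.
  assert (E00 : forall x1 x2 x3, d0 V1 x1 x2 x3 = 0).
  { intros. pose proof (K 0%nat 0%nat x1 x2 x3 ltac:(lia) ltac:(lia)) as h. cbn [Kval] in h.
    apply Rmult_integral in h. destruct h as [h|h]; auto. exfalso.
    unfold Rdiv in h. apply Rmult_integral in h. destruct h as [h|h]; [lra|].
    exact (Rinv_neq_0_compat _ (Hf1nz x1) h). }
  assert (E11 : forall x1 x2 x3, d1 V2 x1 x2 x3 = 0).
  { intros. pose proof (K 1%nat 1%nat x1 x2 x3 ltac:(lia) ltac:(lia)) as h. cbn [Kval] in h.
    apply Rmult_integral in h. destruct h as [h|h]; auto. exfalso.
    unfold Rdiv in h. apply Rmult_integral in h. destruct h as [h|h]; [lra|].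
    exact (Rinv_neq_0_compat _ Hk2 h). }
  assert (E22 : forall x1 x2 x3, d2 V3 x1 x2 x3 = 0).
  { intros. pose proof (K 2%nat 2%nat x1 x2 x3 ltac:(lia) ltac:(lia)) as h. cbn [Kval] in h.
    apply Rmult_integral in h. destruct h as [h|h]; auto. exfalso.
    unfold Rdiv in h. apply Rmult_integral in h. destruct h as [h|h]; [lra|].
    exact (Rinv_neq_0_compat _ Hk3 h). }
  assert (E01 : forall x1 x2 x3, d0 V2 x1 x2 x3 / k2 + d1 V1 x1 x2 x3 / f1 x1 = 0).
  { intros. exact (K 0%nat 1%nat x1 x2 x3 ltac:(lia) ltac:(lia)). }
  assert (E02 : forall x1 x2 x3, d0 V3 x1 x2 x3 / k3 + d2 V1 x1 x2 x3 / f1 x1 = 0).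
  { intros. exact (K 0%nat 2%nat x1 x2 x3 ltac:(lia) ltac:(lia)). }
  assert (E12 : forall x1 x2 x3, d1 V3 x1 x2 x3 / k3 + d2 V2 x1 x2 x3 / k2 = 0).
  { intros. exact (K 1%nat 2%nat x1 x2 x3 ltac:(lia) ltac:(lia)). }
  clear K.
  assert (I1 : forall x1 x2 x3, V1 (x1,x2,x3) = V1 (0,x2,x3)).
  { intros. apply (L_const (fun t => V1 (t,x2,x3))). intro t.
    apply Derive_line. exact (proj1 (X1 t x2 x3)). exact (E00 t x2 x3). }
  assert (I2 : forall x1 x2 x3, V2 (x1,x2,x3) = V2 (x1,0,x3)).
  { intros. apply (L_const (fun t => V2 (x1,t,x3))). intro t.
    apply Derive_line. exact (proj1 (proj2 (X2 x1 t x3))). exact (E11 x1 t x3). }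
  assert (I3 : forall x1 x2 x3, V3 (x1,x2,x3) = V3 (x1,x2,0)).
  { intros. apply (L_const (fun t => V3 (x1,x2,t))). intro t.
    apply Derive_line. exact (proj2 (proj2 (X3 x1 x2 t))). exact (E22 x1 x2 t). }
  set (A := fun x2 x3 => d1 V1 0 x2 x3).
  set (B := fun x2 x3 => d2 V1 0 x2 x3).
  assert (D1V1 : forall x1 x2 x3, d1 V1 x1 x2 x3 = A x2 x3).
  { intros. unfold A, d1. apply Derive_ext. intro t. apply I1. }
  assert (D2V1 : forall x1 x2 x3, d2 V1 x1 x2 x3 = B x2 x3).
  { intros. unfold B, d2. apply Derive_ext. intro t. apply I1. }
  assert (D0V2 : forall x1 x2 x3, d0 V2 x1 x2 x3 = d0 V2 x1 0 x3).
  { intros. unfold d0. apply Derive_ext. intro t. apply I2. }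
  assert (D0V3 : forall x1 x2 x3, d0 V3 x1 x2 x3 = d0 V3 x1 x2 0).
  { intros. unfold d0. apply Derive_ext. intro t. apply I3. }
  assert (Aind : forall x2 x3, A x2 x3 = A 0 x3).
  { intros. pose proof (E01 0 x2 x3) as h1. pose proof (E01 0 0 x3) as h2.
    rewrite D1V1, D0V2 in h1. rewrite D1V1 in h2.
    pose proof (Hf1nz 0). apply (Rmult_eq_reg_r (/ f1 0)); [|auto with real]. 
    unfold Rdiv in *. lra. }
  assert (Bind : forall x2 x3, B x2 x3 = B x2 0).
  { intros. pose proof (E02 0 x2 x3) as h1. pose proof (E02 0 x2 0) as h2.
    rewrite D2V1, D0V3 in h1. rewrite D2V1 in h2.
    pose proof (Hf1nz 0). apply (Rmult_eq_reg_r (/ f1 0)); [|auto with real]. 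
    unfold Rdiv in *. lra. }
  set (a := fun x3 => A 0 x3). set (b := fun x2 => B x2 0).
  assert (P0V2 : forall x1 x2 x3, d0 V2 x1 x2 x3 = - k2 * a x3 * / f1 x1).
  { intros. pose proof (E01 x1 x2 x3) as h. rewrite D1V1, Aind in h. unfold a.
    pose proof (Hf1nz x1). field_simplify_eq; auto. field_simplify_eq in h; auto. lra. }
  assert (P0V3 : forall x1 x2 x3, d0 V3 x1 x2 x3 = - k3 * b x2 * / f1 x1).
  { intros. pose proof (E02 x1 x2 x3) as h. rewrite D2V1, Bind in h. unfold b.
    pose proof (Hf1nz x1). field_simplify_eq; auto. field_simplify_eq in h; auto. lra. }
  assert (LA : forall x2 x3, V1 (0,x2,x3) = V1 (0,0,x3) + a x3 * x2).
  { intros. apply (L_lin (fun t => V1 (0,t,x3)) (a x3)). intro t.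
    apply Derive_line. exact (proj1 (proj2 (X1 0 t x3))).
    change (A t x3 = a x3). unfold a. apply Aind. }
  assert (LB : forall x2 x3, V1 (0,x2,x3) = V1 (0,x2,0) + b x2 * x3).
  { intros. apply (L_lin (fun t => V1 (0,x2,t)) (b x2)). intro t.
    apply Derive_line. exact (proj2 (proj2 (X1 0 x2 t))).
    change (B x2 t = b x2). unfold b. apply Bind. }
  set (al := b 1 - b 0).
  assert (Ha : forall x3, a x3 = a 0 + al * x3).
  { intros. pose proof (LA 1 x3). pose proof (LB 1 x3). pose proof (LB 0 x3). pose proof (LA 1 0).
    unfold al. lra. }
  assert (Hb : forall x2, b x2 = b 0 + al * x2).
  { intros. pose proof (LB x2 1). pose proof (LA x2 1). pose proof (LA x2 0). pose proof (LB 0 1).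
    pose proof (Ha 1). rewrite H3 in H0. lra. }
  assert (G2 : forall x1 x2 x3, V2 (x1,x2,x3) = V2 (0,x2,x3) + (- k2 * a x3) * (F x1 - F 0)).
  { intros. apply (L_F (fun t => V2 (t,x2,x3)) F f1 (- k2 * a x3) HF). intro t.
    apply Derive_line. exact (proj1 (X2 t x2 x3)). exact (P0V2 t x2 x3). }
  assert (G3 : forall x1 x2 x3, V3 (x1,x2,x3) = V3 (0,x2,x3) + (- k3 * b x2) * (F x1 - F 0)).
  { intros. apply (L_F (fun t => V3 (t,x2,x3)) F f1 (- k3 * b x2) HF). intro t.
    apply Derive_line. exact (proj1 (X3 t x2 x3)). exact (P0V3 t x2 x3). }
  assert (exF : forall x, ex_derive F x) by (intro x; eexists; apply HF).
  assert (D1V3 : forall x1 x2 x3, d1 V3 x1 x2 x3 = d1 V3 0 x2 0 + (- k3 * al * (F x1 - F 0))).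
  { intros. unfold d1.
    rewrite (Derive_ext (fun t => V3 (x1,t,x3)) (fun t => V3 (0,t,0) + (- k3 * (b 0 + al * t)) * (F x1 - F 0))).
    2:{ intro t. rewrite (G3 x1 t x3), (I3 0 t x3), Hb. ring. }
    rewrite Derive_plus.
    - f_equal. apply is_derive_unique. auto_derive; auto. ring.
    - exact (proj1 (proj2 (X3 0 x2 0))).
    - auto_derive; auto. }
  assert (D2V2 : forall x1 x2 x3, d2 V2 x1 x2 x3 = d2 V2 0 0 x3 + (- k2 * al * (F x1 - F 0))).
  { intros. unfold d2.
    rewrite (Derive_ext (fun t => V2 (x1,x2,t)) (fun t => V2 (0,0,t) + (- k2 * (a 0 + al * t)) * (F x1 - F 0))).
    2:{ intro t. rewrite (G2 x1 x2 t), (I2 0 x2 t), Ha. ring. }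
    rewrite Derive_plus.
    - f_equal. apply is_derive_unique. auto_derive; auto. ring.
    - exact (proj2 (proj2 (X2 0 0 x3))).
    - auto_derive; auto. }
  assert (E12' : forall x1 x2 x3, d1 V3 0 x2 0 / k3 + d2 V2 0 0 x3 / k2 - 2 * al * (F x1 - F 0) = 0).
  { intros. pose proof (E12 x1 x2 x3) as h. rewrite D1V3, D2V2 in h.
    etransitivity; [|exact h]. field. auto. }
  assert (al0 : al = 0).
  { destruct (F_nonconst F f1 HF Hf1nz) as [x hx].
    pose proof (E12' x 0 0) as h1. pose proof (E12' 0 0 0) as h2.
    assert (al * (F x - F 0) = 0) by lra.
    apply Rmult_integral in H. destruct H; auto. exfalso; apply hx; lra. }
  set (ph := d1 V3 0 0 0).
  assert (Hph : forall x2, d1 V3 0 x2 0 = ph).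
  { intros. pose proof (E12' 0 x2 0) as h1. pose proof (E12' 0 0 0) as h2.
    apply (Rmult_eq_reg_r (/ k3)); [|auto with real]. unfold Rdiv in *. unfold ph. lra. }
  assert (Hps : forall x3, d2 V2 0 0 x3 = - k2 * ph / k3).
  { intros. pose proof (E12' 0 0 x3) as h1. rewrite Hph in h1. rewrite al0 in h1.
    field_simplify_eq; auto. field_simplify_eq in h1; auto. lra. }
  assert (LV3 : forall x2, V3 (0,x2,0) = V3 (0,0,0) + ph * x2).
  { intros. apply (L_lin (fun t => V3 (0,t,0)) ph). intro t.
    apply Derive_line. exact (proj1 (proj2 (X3 0 t 0))). exact (Hph t). }
  assert (LV2 : forall x3, V2 (0,0,x3) = V2 (0,0,0) + (- k2 * ph / k3) * x3).
  { intros. apply (L_lin (fun t => V2 (0,0,t)) (- k2 * ph / k3)). intro t.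
    apply Derive_line. exact (proj2 (proj2 (X2 0 0 t))). exact (Hps t). }
  exists (a 0), (b 0), (V1 (0,0,0)), (k2 * ph), (V2 (0,0,0) + k2 * a 0 * F 0), (V3 (0,0,0) + k3 * b 0 * F 0).
  intros x1 x2 x3. split; [|split].
  + rewrite (I1 x1 x2 x3), (LA x2 x3), (LB 0 x3), (Ha x3), al0. ring.
  + rewrite (G2 x1 x2 x3), (I2 0 x2 x3), (LV2 x3), (Ha x3), al0. field. auto.
  + rewrite (I3 x1 x2 x3), (G3 x1 x2 0), (LV3 x2), (Hb x2), al0. field. auto.
- intros (c1 & c2 & c3 & c4 & c5 & c6 & H).
  assert (exF : forall x, ex_derive F x) by (intro x; eexists; apply HF).
  assert (DF : forall x, Derive F x = / f1 x) by (intro x; apply is_derive_unique; apply HF).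
  intros i j x1 x2 x3 Hi Hj.
  assert (a00 : d0 V1 x1 x2 x3 = 0).
  { unfold d0. rewrite (Derive_ext _ (fun t => c1 * x2 + c2 * x3 + c3)).
    - apply Derive_const.
    - intro t; exact (proj1 (H t x2 x3)). }
  assert (a01 : d1 V1 x1 x2 x3 = c1).
  { unfold d1. rewrite (Derive_ext _ (fun t => c1 * t + c2 * x3 + c3)).
    - apply is_derive_unique; auto_derive; auto; ring.
    - intro t; exact (proj1 (H x1 t x3)). }
  assert (a02 : d2 V1 x1 x2 x3 = c2).
  { unfold d2. rewrite (Derive_ext _ (fun t => c1 * x2 + c2 * t + c3)).
    - apply is_derive_unique; auto_derive; auto; ring.
    - intro t; exact (proj1 (H x1 x2 t)). }
  assert (a10 : d0 V2 x1 x2 x3 = - c1 * k2 / f1 x1).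
  { unfold d0. rewrite (Derive_ext _ (fun t => - c1 * k2 * F t - c4 / k3 * x3 + c5)).
    - apply is_derive_unique; auto_derive; auto. rewrite DF. field. auto.
    - intro t; exact (proj1 (proj2 (H t x2 x3))). }
  assert (a11 : d1 V2 x1 x2 x3 = 0).
  { unfold d1. rewrite (Derive_ext _ (fun t => - c1 * k2 * F x1 - c4 / k3 * x3 + c5)).
    - apply Derive_const.
    - intro t; exact (proj1 (proj2 (H x1 t x3))). }
  assert (a12 : d2 V2 x1 x2 x3 = - c4 / k3).
  { unfold d2. rewrite (Derive_ext _ (fun t => - c1 * k2 * F x1 - c4 / k3 * t + c5)).
    - apply is_derive_unique; auto_derive; auto. field. auto.
    - intro t; exact (proj1 (proj2 (H x1 x2 t))). }
  assert (a20 : d0 V3 x1 x2 x3 = - c2 * k3 / f1 x1).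
  { unfold d0. rewrite (Derive_ext _ (fun t => - c2 * k3 * F t + c4 / k2 * x2 + c6)).
    - apply is_derive_unique; auto_derive; auto. rewrite DF. field. auto.
    - intro t; exact (proj2 (proj2 (H t x2 x3))). }
  assert (a21 : d1 V3 x1 x2 x3 = c4 / k2).
  { unfold d1. rewrite (Derive_ext _ (fun t => - c2 * k3 * F x1 + c4 / k2 * t + c6)).
    - apply is_derive_unique; auto_derive; auto. field. auto.
    - intro t; exact (proj2 (proj2 (H x1 t x3))). }
  assert (a22 : d2 V3 x1 x2 x3 = 0).
  { unfold d2. rewrite (Derive_ext _ (fun t => - c2 * k3 * F x1 + c4 / k2 * x2 + c6)).
    - apply Derive_const.
    - intro t; exact (proj2 (proj2 (H x1 x2 t))). }
  pose proof (Hf1nz x1).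
  destruct i as [|[|[|i]]]; try lia; destruct j as [|[|[|j]]]; try lia; cbn [Kval];
  rewrite ?a00, ?a01, ?a02, ?a10, ?a11, ?a12, ?a20, ?a21, ?a22; field; auto.
Qed.
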